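(* Let $\mathcal{H}$ be a finite-dimensional complex Hilbert space, let $s \geq 2$ be an integer and set $\epsilon = \frac{1}{s}$. Let $P_1, \ldots, P_s$ and $P$ be orthogonal projectors on $\mathcal{H}$ such that $P_i P_j = P_j P_i$ for all $i, j$, $P P_i = P$ for all $1 \leq i \leq s$, and $P_i P_j = P$ for all $i \neq j$. Then \[ \max_{\ket{\psi}} \Delta\left(P\ket{\psi}\bra{\psi}P,\ \frac{1}{s}\sum_{i=1}^{s} P_i \ket{\psi}\bra{\psi} P_i\right) \leq \sqrt{\epsilon}, \] where the maximum ranges over all unit vectors $\ket{\psi} \in \mathcal{H}$.
   Context: For (possibly subnormalised) positive semidefinite operators $\rho_0, \rho_1$ on $\mathcal{H}$, $\Delta(\rho_0,\rho_1) := \frac{1}{2}\lVert \rho_0 - \rho_1 \rVert_1$ denotes the trace-norm distance. In the paper's notation $P\ket{\psi}$ in the first argument of $\Delta$ stands for the (subnormalised) state $P\ket{\psi}\bra{\psi}P$. *)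

(* Defs.v *)
(* Finite-dimensional complex Hilbert space = C^n (column vectors),
   C an arbitrary numClosedFieldType (e.g. complex numbers). *)
From HB Require Import structures.
From mathcomp Require Import all_boot all_order all_algebra.
From Stdlib Require Import ClassicalEpsilon.
Set Implicit Arguments. Unset Strict Implicit. Unset Printing Implicit Defensive.
Import Order.TTheory GRing.Theory Num.Theory.
Local Open Scope ring_scope.

Definition adjmx (C : numClosedFieldType) m n (A : 'M[C]_(m, n)) : 'M[C]_(n, m) :=
  (map_mx Num.conj A)^T.

Definition psdmx (C : numClosedFieldType) n (A : 'M[C]_n) : Prop :=
  adjmx A = A /\ forall v : 'cV[C]_n, 0 <= (adjmx v *m A *m v) 0 0.

Definition orth_proj (C : numClosedFieldType) n (P : 'M[C]_n) : Prop :=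
  P *m P = P /\ adjmx P = P.

Definition psd_sqrt (C : numClosedFieldType) n (A : 'M[C]_n) : 'M[C]_n :=
  epsilon (inhabits 0) (fun B : 'M[C]_n => psdmx B /\ B *m B = A).

Definition trnorm (C : numClosedFieldType) n (X : 'M[C]_n) : C :=
  \tr (psd_sqrt (adjmx X *m X)).

Definition trdist (C : numClosedFieldType) n (rho0 rho1 : 'M[C]_n) : C :=
  trnorm (rho0 - rho1) / 2.

Definition ketbra (C : numClosedFieldType) n (psi : 'cV[C]_n) : 'M[C]_n :=
  psi *m adjmx psi.

Definition unit_vec (C : numClosedFieldType) n (psi : 'cV[C]_n) : Prop :=
  (adjmx psi *m psi) 0 0 = 1.

(* Main.v *)
Require Import Defs.
From HB Require Import structures.
From mathcomp Require Import all_boot all_order all_algebra.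
From Stdlib Require Import ClassicalEpsilon.
From mathcomp Require Import ring lra.
Import Order.TTheory GRing.Theory Num.Theory.
Local Open Scope ring_scope.
Set Implicit Arguments. Unset Strict Implicit. Unset Printing Implicit Defensive.


Section Adj.
Variable C : numClosedFieldType.

Lemma adjmxE m n (A : 'M[C]_(m, n)) i j : adjmx A i j = (A j i)^*.
Proof. by rewrite /adjmx !mxE. Qed.

Lemma adjmxK m n (A : 'M[C]_(m, n)) : adjmx (adjmx A) = A.
Proof. by apply/matrixP => i j; rewrite !adjmxE conjCK. Qed.

Lemma adjmxM m n p (A : 'M[C]_(m, n)) (B : 'M[C]_(n, p)) :
  adjmx (A *m B) = adjmx B *m adjmx A.
Proof.
apply/matrixP => i j; rewrite !adjmxE !mxE rmorph_sum /=.
by apply: eq_bigr => k _; rewrite !adjmxE rmorphM mulrC.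
Qed.

Lemma adjmxD m n (A B : 'M[C]_(m, n)) : adjmx (A + B) = adjmx A + adjmx B.
Proof. by apply/matrixP => i j; rewrite !adjmxE !mxE rmorphD. Qed.

Lemma adjmxN m n (A : 'M[C]_(m, n)) : adjmx (- A) = - adjmx A.
Proof. by apply/matrixP => i j; rewrite !adjmxE !mxE rmorphN. Qed.

Lemma adjmxB m n (A B : 'M[C]_(m, n)) : adjmx (A - B) = adjmx A - adjmx B.
Proof. by rewrite adjmxD adjmxN. Qed.

Lemma adjmxZ m n a (A : 'M[C]_(m, n)) : adjmx (a *: A) = a^* *: adjmx A.
Proof. by apply/matrixP => i j; rewrite !adjmxE !mxE rmorphM. Qed.

Lemma adjmx_sum m n I (r : seq I) (P : pred I) (F : I -> 'M[C]_(m, n)) :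
  adjmx (\sum_(i <- r | P i) F i) = \sum_(i <- r | P i) adjmx (F i).
Proof.
apply: (big_morph _ (@adjmxD m n)).
by apply/matrixP => i j; rewrite adjmxE !mxE rmorph0.
Qed.

Lemma adjmx1 n : adjmx (1%:M : 'M[C]_n) = 1%:M.
Proof. by apply/matrixP => i j; rewrite adjmxE !mxE eq_sym; case: (_ == _); rewrite ?rmorph1 ?rmorph0. Qed.

Lemma adjmx_diag n (d : 'rV[C]_n) : adjmx (diag_mx d) = diag_mx (map_mx Num.conj d).
Proof.
apply/matrixP => i j; rewrite adjmxE !mxE eq_sym; case: eqP => [->|_]; by rewrite ?mulr1n ?mulr0n ?rmorph0.
Qed.

Lemma adjmx_tc m n (A : 'M[C]_(m, n)) : adjmx A = (A ^T ^ Num.conj)%sesqui.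
Proof. by apply/matrixP => i j; rewrite adjmxE !mxE. Qed.

Definition dot n (u v : 'cV[C]_n) : C := (adjmx u *m v) 0 0.

Lemma dotE n (u v : 'cV[C]_n) : dot u v = \sum_i (u i 0)^* * v i 0.
Proof. by rewrite /dot mxE; apply: eq_bigr => i _; rewrite adjmxE. Qed.

Lemma dot_conj n (u v : 'cV[C]_n) : (dot u v)^* = dot v u.
Proof.
rewrite !dotE rmorph_sum; apply: eq_bigr => i _.
by rewrite rmorphM /= conjCK mulrC.
Qed.

Lemma dot_ge0 n (u : 'cV[C]_n) : 0 <= dot u u.
Proof.
rewrite dotE; apply: sumr_ge0 => i _; rewrite -normCKC; exact: exprn_ge0.
Qed.

Lemma dotDl n (u v w : 'cV[C]_n) : dot (u + v) w = dot u w + dot v w.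
Proof. by rewrite /dot adjmxD mulmxDl mxE. Qed.
Lemma dotDr n (u v w : 'cV[C]_n) : dot w (u + v) = dot w u + dot w v.
Proof. by rewrite /dot mulmxDr mxE. Qed.
Lemma dotNl n (u w : 'cV[C]_n) : dot (- u) w = - dot u w.
Proof. by rewrite /dot adjmxN mulNmx mxE. Qed.

Lemma dot_amgm n (u v : 'cV[C]_n) : - (dot u v + dot v u) <= dot u u + dot v v.
Proof.
rewrite -subr_ge0; suff -> : dot u u + dot v v - - (dot u v + dot v u) = dot (u + v) (u + v) by exact: dot_ge0.
by rewrite !dotDl !dotDr; ring.
Qed.

End Adj.


Section Spec.
Variable C : numClosedFieldType.

Lemma adjmx_delta m n (i : 'I_m) (j : 'I_n) : adjmx (delta_mx i j : 'M[C]_(m,n)) = delta_mx j i.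
Proof. apply/matrixP => a b; rewrite adjmxE !mxE andbC; case: (_ && _); by rewrite ?rmorph1 ?rmorph0. Qed.

Lemma hermitian_spectral n (B : 'M[C]_n) : adjmx B = B ->
  exists U (d : 'rV[C]_n), [/\ U *m adjmx U = 1%:M, adjmx U *m U = 1%:M &
     B = adjmx U *m diag_mx d *m U].
Proof.
move=> hB.
have nB : B \is normalmx by apply/normalmxP; rewrite -adjmx_tc hB.
have := orthomx_spectralP nB.
set U := spectralmx B; set d := spectral_diag B => eB.
have Uu : U \is unitarymx := spectral_unitarymx B.
have iU : invmx U = adjmx U by rewrite adjmx_tc invmx_unitary.
exists U, d; split.
- by rewrite adjmx_tc; apply/unitarymxP.
- by rewrite -iU mulVmx // unitarymx_unit.
- by rewrite -iU.
Qed.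

Lemma quad_delta n (U : 'M[C]_n) (d : 'rV[C]_n) k : U *m adjmx U = 1%:M ->
  let v := adjmx U *m (delta_mx k (0 : 'I_1) : 'cV[C]_n) in
  (adjmx v *m (adjmx U *m diag_mx d *m U) *m v) 0 0 = d 0 k.
Proof.
move=> hU v; rewrite /v adjmxM adjmxK adjmx_delta.
rewrite !mulmxA -(mulmxA _ U) hU mulmx1 -(mulmxA _ U) hU mulmx1.
by rewrite -rowE -colE !mxE eqxx mulr1n.
Qed.

Lemma psd_spectral n (B : 'M[C]_n) : psdmx B ->
  exists U (d : 'rV[C]_n), [/\ U *m adjmx U = 1%:M, adjmx U *m U = 1%:M,
     (forall k, 0 <= d 0 k) & B = adjmx U *m diag_mx d *m U].
Proof.
move=> [hB hq]; have [U [d [h1 h2 h3]]] := hermitian_spectral hB.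
exists U, d; split => // k.
have := hq (adjmx U *m (delta_mx k (0 : 'I_1) : 'cV[C]_n)); rewrite {1}h3.
by rewrite (quad_delta d k h1).
Qed.

End Spec.


Section Sqrt.
Variable C : numClosedFieldType.

Lemma quad_diag n (U : 'M[C]_n) (e : 'rV[C]_n) (v : 'cV[C]_n) :
  (adjmx v *m (adjmx U *m diag_mx e *m U) *m v) 0 0
   = \sum_k e 0 k * `|(U *m v) k 0| ^+ 2.
Proof.
rewrite !mulmxA -adjmxM -(mulmxA _ _ U) -mulmxA.
rewrite -(mulmxA _ U) -/(U *m v) mulmxA; set w := U *m v.
rewrite mul_mx_diag mxE; apply: eq_bigr => k _.
by rewrite !mxE normCKC; ring.
Qed.

Lemma psd_sqrt_exists n (M : 'M[C]_n) : psdmx M ->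
  exists B : 'M[C]_n, psdmx B /\ B *m B = M.
Proof.
move=> /psd_spectral [U [d [h1 h2 h3 ->]]].
pose e := \row_k sqrtC (d 0 k).
have ge : forall k, 0 <= e 0 k by move=> k; rewrite mxE sqrtC_ge0.
exists (adjmx U *m diag_mx e *m U); split; first split.
- rewrite !adjmxM adjmxK adjmx_diag mulmxA; congr (_ *m _ *m _).
  by apply/matrixP => i j; rewrite !mxE geC0_conj // sqrtC_ge0.
- move=> v; rewrite quad_diag; apply: sumr_ge0 => k _.
  by apply: mulr_ge0 => //; exact: exprn_ge0.
- rewrite -!mulmxA (mulmxA U) h1 mul1mx (mulmxA (diag_mx e)) mulmx_diag.
  congr (_ *m (diag_mx _ *m _)); apply/matrixP => i j.
  by rewrite !mxE -expr2 sqrtCK ord1.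
Qed.

Lemma psd_sqrt_spec n (M : 'M[C]_n) : psdmx M ->
  psdmx (psd_sqrt M) /\ psd_sqrt M *m psd_sqrt M = M.
Proof.
move=> hM; rewrite /psd_sqrt; apply: (epsilon_spec (inhabits (0 : 'M[C]_n)) (fun B => psdmx B /\ B *m B = M)).
by have [B hB] := psd_sqrt_exists hM; exists B.
Qed.

Lemma psd_AtA n (X : 'M[C]_n) : psdmx (adjmx X *m X).
Proof.
split; first by rewrite adjmxM adjmxK.
by move=> v; rewrite mulmxA -adjmxM -mulmxA; exact: dot_ge0.
Qed.

End Sqrt.


Section Key.
Variable C : numClosedFieldType.

Lemma dotM n (A : 'M[C]_n) (u v : 'cV[C]_n) : dot (A *m u) v = dot u (adjmx A *m v).
Proof. by rewrite /dot adjmxM mulmxA. Qed.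

Lemma key_repr n (X B : 'M[C]_n) : psdmx B -> B *m B = adjmx X *m X ->
  exists W V : 'M[C]_n,
    [/\ \tr B = \tr (adjmx W *m X *m V),
        (forall x, dot (adjmx W *m x) (adjmx W *m x) <= dot x x) &
        (forall y, dot (adjmx V *m y) (adjmx V *m y) = dot y y)].
Proof.
move=> /psd_spectral [U [d [h1 h2 hd eB]]] hBX.
pose Dp := diag_mx (\row_k (d 0 k)^-1).
pose D := diag_mx d.
have aDp : adjmx Dp = Dp.
  rewrite /Dp adjmx_diag; congr diag_mx; apply/matrixP => i j.
  by rewrite !mxE geC0_conj // invr_ge0.
have G : U *m (adjmx X *m X) *m adjmx U = D *m D.
  rewrite -hBX eB -!mulmxA h1 mulmx1 !mulmxA h1 mul1mx.
  by rewrite -!mulmxA (mulmxA U) h1 mul1mx.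
pose W := X *m adjmx U *m Dp.
exists W, (adjmx U); split.
- have -> : adjmx W *m X *m adjmx U = Dp *m (U *m (adjmx X *m X) *m adjmx U).
    by rewrite /W !adjmxM adjmxK aDp !mulmxA.
  rewrite G eB mxtrace_mulC mulmxA h1 mul1mx !mulmx_diag !mxtrace_diag.
  apply: eq_bigr => k _; rewrite !mxE.
  have [->|nz] := eqVneq (d 0 k) 0; first by rewrite !mulr0.
  by rewrite mulrA mulVf // mul1r.
- move=> x; set z := adjmx W *m x.
  pose E := Dp *m (D *m D) *m Dp.
  have WW : adjmx W *m W = E.
    by rewrite /W !adjmxM adjmxK aDp /E -G !mulmxA.
  have WE : W *m E = W.
    rewrite /W -!mulmxA; congr (_ *m (_ *m _)).
    rewrite /E !mulmx_diag; congr diag_mx; apply/matrixP => i j; rewrite !mxE.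
    have [->|nz] := eqVneq (d 0 j) 0; first by rewrite invr0 !mulr0.
    by field.
  have aD : adjmx D = D.
    rewrite /D adjmx_diag; congr diag_mx; apply/matrixP => i j.
    by rewrite !mxE geC0_conj // ord1.
  have aE : adjmx E = E by rewrite /E !adjmxM aDp aD !mulmxA.
  have Ez : E *m z = z by rewrite /z mulmxA -aE -adjmxM WE.
  have e1 : dot x (W *m z) = dot z z by rewrite /dot /z adjmxM adjmxK !mulmxA.
  have e2 : dot (W *m z) x = dot z z by rewrite dotM.
  have e3 : dot (W *m z) (W *m z) = dot z z by rewrite dotM mulmxA WW Ez.
  have := dot_ge0 (x - W *m z).
  have dotNr : forall u v : 'cV[C]_n, dot u (- v) = - dot u v.
    by move=> u v; rewrite /dot mulmxN mxE.
  rewrite !dotDl !dotDr !dotNl !dotNr opprK e1 e2 e3.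
  by rewrite addNr addr0 subr_ge0.
- by move=> y; rewrite -dotM adjmxK mulmxA h2 mul1mx.
Qed.

End Key.


Section Proj.
Variable C : numClosedFieldType.

Lemma proj_dot n (R : 'M[C]_n) (u : 'cV[C]_n) : R *m R = R -> adjmx R = R ->
  dot u (R *m u) = dot (R *m u) (R *m u).
Proof. by move=> h1 h2; rewrite dotM h2 mulmxA h1. Qed.

Lemma proj_le n (R : 'M[C]_n) (u : 'cV[C]_n) : R *m R = R -> adjmx R = R ->
  dot u (R *m u) <= dot u u.
Proof.
move=> h1 h2; set S := 1%:M - R.
have S1 : S *m S = S by rewrite /S mulmxBl mul1mx !mulmxBr mulmx1 h1 subrr subr0.
have S2 : adjmx S = S by rewrite /S adjmxB adjmx1 h2.
have := dot_ge0 (S *m u); rewrite -proj_dot // /S mulmxBl mul1mx.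
have dotNr : forall v w : 'cV[C]_n, dot v (- w) = - dot v w.
  by move=> v w; rewrite /dot mulmxN mxE.
by rewrite dotDr dotNr subr_ge0.
Qed.

Variables (n s : nat) (Ps : 'I_s -> 'M[C]_n) (P : 'M[C]_n).
Hypotheses (hPs : forall i, orth_proj (Ps i)) (hP : orth_proj P)
  (hPPi : forall i, P *m Ps i = P)
  (hPiPj : forall i j, i != j -> Ps i *m Ps j = P).

Definition Qi i := Ps i - P.
Definition Q := \sum_i Qi i.

Lemma PiP i : Ps i *m P = P.
Proof.
have := congr1 (@adjmx C n n) (hPPi i).
by rewrite adjmxM (hPs i).2 hP.2.
Qed.

Lemma Qi_adj i : adjmx (Qi i) = Qi i.
Proof. by rewrite /Qi adjmxB (hPs i).2 hP.2. Qed.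

Lemma Qi_idem i : Qi i *m Qi i = Qi i.
Proof.
rewrite /Qi mulmxBl !mulmxBr (hPs i).1 hPPi PiP hP.1.
by rewrite subrr subr0.
Qed.

Lemma Qi_orth i j : i != j -> Qi i *m Qi j = 0.
Proof.
move=> ij; rewrite /Qi mulmxBl !mulmxBr hPiPj // hPPi PiP hP.1.
by rewrite !subrr.
Qed.

Lemma PQi i : P *m Qi i = 0.
Proof. by rewrite /Qi mulmxBr hPPi hP.1 subrr. Qed.
Lemma QiP i : Qi i *m P = 0.
Proof. by rewrite /Qi mulmxBl PiP hP.1 subrr. Qed.

Lemma Q_adj : adjmx Q = Q.
Proof. by rewrite /Q adjmx_sum; apply: eq_bigr => i _; rewrite Qi_adj. Qed.

Lemma Q_idem : Q *m Q = Q.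
Proof.
rewrite /Q mulmx_suml; apply: eq_bigr => i _.
rewrite mulmx_sumr (bigD1 i) //= Qi_idem big1 ?addr0 // => j ji.
by rewrite Qi_orth // eq_sym.
Qed.

Lemma PQ : P *m Q = 0.
Proof. by rewrite /Q mulmx_sumr big1 // => i _; rewrite PQi. Qed.
Lemma QP : Q *m P = 0.
Proof. by rewrite /Q mulmx_suml big1 // => i _; rewrite QiP. Qed.

Lemma R_idem : (P + Q) *m (P + Q) = P + Q.
Proof. by rewrite mulmxDl !mulmxDr hP.1 PQ QP Q_idem add0r addr0. Qed.
Lemma R_adj : adjmx (P + Q) = P + Q.
Proof. by rewrite adjmxD hP.2 Q_adj. Qed.

End Proj.


Lemma tr_psd_ge0 (C : numClosedFieldType) n (B : 'M[C]_n) : psdmx B -> 0 <= \tr B.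
Proof.
move=> [_ hq]; rewrite /mxtrace; apply: sumr_ge0 => k _.
have := hq (delta_mx k (0 : 'I_1)); rewrite adjmx_delta -rowE -colE !mxE.
by rewrite ?eqxx ?mulr1n.
Qed.

Unset Implicit Arguments.

Theorem lemma1 (C : numClosedFieldType) (n s : nat) (hs : (2 <= s)%N)
  (Ps : 'I_s -> 'M[C]_n) (P : 'M[C]_n)
  (hPs : forall i, orth_proj (Ps i)) (hP : orth_proj P)
  (hcomm : forall i j, Ps i *m Ps j = Ps j *m Ps i)
  (hPPi : forall i, P *m Ps i = P)
  (hPiPj : forall i j, i != j -> Ps i *m Ps j = P) :
  forall psi : 'cV[C]_n, unit_vec psi ->
    trdist (P *m ketbra psi *m P)
           (s%:R^-1 *: \sum_(i < s) (Ps i *m ketbra psi *m Ps i))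
    <= sqrtC (s%:R^-1).
Proof.
move=> psi hpsi.
rewrite /trdist /trnorm.
set X := (_ - _).
have [hBp hBB] := psd_sqrt_spec (psd_AtA X).
set B := psd_sqrt _ in hBp hBB *.
have [W [V [htr hW hV]]] := key_repr hBp hBB.
pose g (u v : 'cV[C]_n) := dot (adjmx V *m v) (adjmx W *m u).
have f1 : forall u v, \tr (adjmx W *m (u *m adjmx v) *m V) = g u v.
  move=> u v.
  have -> : adjmx W *m (u *m adjmx v) *m V = (adjmx W *m u) *m (adjmx v *m V).
    by rewrite !mulmxA.
  by rewrite mxtrace_mulC trace_mx11 /g /dot adjmxM adjmxK.
have pk : forall A : 'M[C]_n, adjmx A = A ->
    A *m ketbra psi *m A = (A *m psi) *m adjmx (A *m psi).
  by move=> A hA; rewrite /ketbra adjmxM hA !mulmxA.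
have gDl : forall u1 u2 v, g (u1 + u2) v = g u1 v + g u2 v.
  by move=> u1 u2 v; rewrite /g mulmxDr dotDr.
have gDr : forall u v1 v2, g u (v1 + v2) = g u v1 + g u v2.
  by move=> u v1 v2; rewrite /g mulmxDr dotDl.
have g0l : forall v, g 0 v = 0 by move=> v; rewrite /g mulmx0 /dot mulmx0 mxE.
have g0r : forall u, g u 0 = 0 by move=> u; rewrite /g mulmx0 /dot adjmx_tc trmx0 map_mx0 mul0mx mxE.
pose a := P *m psi.
pose bi i := Qi Ps P i *m psi.
pose b := Q Ps P *m psi.
have hb : b = \sum_i bi i by rewrite /b /Q mulmx_suml.
have Pa : forall i, Ps i *m psi = a + bi i.
  by move=> i; rewrite /a /bi /Qi mulmxBl addrC subrK.
have s0 : s%:R != 0 :> C by rewrite pnatr_eq0 -lt0n (leq_trans _ hs).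
have fX : \tr B = - s%:R^-1 * (g a b + g b a + \sum_i g (bi i) (bi i)).
  rewrite htr /X mulmxBr mulmxBl raddfB /= -scalemxAr -scalemxAl mxtraceZ.
  rewrite mulmx_sumr mulmx_suml raddf_sum /=.
  rewrite pk ?hP.2 // f1.
  under eq_bigr => i _ do rewrite pk ?(hPs i).2 // f1 Pa gDl !gDr.
  rewrite !big_split /= sumr_const card_ord.
  have -> : \sum_i g a (bi i) = g a b.
    by rewrite hb (big_morph _ (gDr a) (g0r a)).
  have -> : \sum_i g (bi i) a = g b a.
    by rewrite hb (big_morph (fun u => g u a) (fun u1 u2 => gDl u1 u2 a) (g0l a)).
  rewrite -/a -[g a a *+ s]mulr_natr.
  have e : g a a = s%:R^-1 * (g a a * s%:R) by rewrite mulrCA mulVf // mulr1.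
  rewrite {1}e; ring.
have T0 : 0 <= \tr B := tr_psd_ge0 hBp.
have Tc : (\tr B)^* = \tr B := geC0_conj T0.
have s0' : (0 < s)%N by rewrite (leq_trans _ hs).
have sp : 0 < s%:R :> C by rewrite ltr0n.
have si0 : 0 <= s%:R^-1 :> C by rewrite invr_ge0 ler0n.
have gb : forall u v, - (g u v + (g u v)^*) <= dot v v + dot u u.
  move=> u v; rewrite /g dot_conj.
  apply: le_trans (dot_amgm _ _) _.
  by rewrite hV lerD2l hW.
set N := (- (g a b + (g a b)^*) + - (g b a + (g b a)^*)
           + \sum_i - (g (bi i) (bi i) + (g (bi i) (bi i))^*)).
have e2 : \tr B + \tr B = s%:R^-1 * N.
  rewrite -{2}Tc fX rmorphM rmorphN /= geC0_conj // !rmorphD rmorph_sum /=.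
  rewrite /N sumrN big_split /=; ring.
have pa0 : dot a a = dot psi (P *m psi) by rewrite /a proj_dot //; case: hP.
have pb : dot b b = dot psi (Q Ps P *m psi).
  by rewrite /b proj_dot // ?(Q_idem hPs hP hPPi hPiPj) ?(Q_adj hPs hP).
have pbi : \sum_i dot (bi i) (bi i) = dot psi (Q Ps P *m psi).
  rewrite /Q mulmx_suml.
  have d0 : dot psi 0 = 0 by rewrite /dot mulmx0 mxE.
  rewrite (big_morph _ (fun u v => dotDr u v psi) d0).
  apply: eq_bigr => i _; rewrite /bi proj_dot //.
    exact: (Qi_idem hPs hP hPPi).
  exact: (Qi_adj hPs hP).
have hR : dot psi (P *m psi) + dot psi (Q Ps P *m psi) <= 1.
  rewrite -dotDr -mulmxDl; apply: le_trans (proj_le _ _ _) _.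
  - exact: (R_idem hPs hP hPPi hPiPj).
  - exact: (R_adj hPs hP).
  by rewrite /dot hpsi.
set pa := dot psi (P *m psi) in pa0 hR *.
set pq := dot psi (Q Ps P *m psi) in pb pbi hR *.
have hN : N <= (pq + pa) + (pa + pq) + (pq + pq).
  have -> : (pq + pa) + (pa + pq) + (pq + pq) = (dot b b + dot a a) + (dot a a + dot b b)
     + \sum_i (dot (bi i) (bi i) + dot (bi i) (bi i)) by rewrite big_split /= pbi pa0 pb.
  apply: lerD; first apply: lerD.
  - exact: gb.
  - exact: gb.
  by apply: ler_sum => i _; exact: gb.
have pa_ge0 : 0 <= pa by rewrite -pa0 dot_ge0.
apply: (@le_trans _ _ (s%:R^-1)).
  have eT : \tr B / 2 = s%:R^-1 * N / 4.
    have h2 : (2 : C) != 0 by rewrite pnatr_eq0.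
    have h4 : (4 : C) != 0 by rewrite pnatr_eq0.
    rewrite -e2; field.
    by [].
  rewrite eT -subr_ge0.
  have -> : s%:R^-1 - s%:R^-1 * N / 4 = s%:R^-1 / 4 *
     (4 * (1 - (pa + pq)) + 2 * pa + ((pq + pa) + (pa + pq) + (pq + pq) - N)).
    have h4 : (4 : C) != 0 by rewrite pnatr_eq0.
    field; by [].
  apply: mulr_ge0; first by rewrite divr_ge0 // ler0n.
  apply: addr_ge0; first apply: addr_ge0.
  - by apply: mulr_ge0; rewrite ?ler0n // subr_ge0.
  - by apply: mulr_ge0; rewrite ?ler0n.
  by rewrite subr_ge0.
rewrite -{1}(sqrCK si0) ler_sqrtC ?nnegrE ?exprn_ge0 //.
rewrite expr2 ger_pMr ?invr_gt0 // invf_le1 // ler1n //.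
Qed.
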